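(* Let $n_0, n_1$ be positive integers and consider fixed (nonrandom) matrices $\mathbf{Z}_0 \in \mathbb{R}^{n_0\times m_0}$, $\mathbf{X}_0 \in \mathbb{R}^{n_0\times k}$, $\mathbf{W}_1 \in \mathbb{R}^{n_1\times k_1}$, $\mathbf{X}_1 \in \mathbb{R}^{n_1\times k}$, where the columns of $\mathbf{X}_0$ and $\mathbf{X}_1$ correspond to the same predictors in the same order, $\mathbf{Z}_0^{\prime}\mathbf{Z}_0$ and $\mathbf{W}_1^{\prime}\mathbf{W}_1$ are invertible, and $\tilde{\mathbf{X}}_0^{\prime}\tilde{\mathbf{X}}_0$ is invertible, where $$\mathbf{M}_0 = \mathbf{I} - \mathbf{Z}_0(\mathbf{Z}_0^{\prime}\mathbf{Z}_0)^{-1}\mathbf{Z}_0^{\prime},\quad \tilde{\mathbf{X}}_0 = \mathbf{M}_0\mathbf{X}_0,\quad \mathbf{M}_1 = \mathbf{I} - \mathbf{W}_1(\mathbf{W}_1^{\prime}\mathbf{W}_1)^{-1}\mathbf{W}_1^{\prime},\quad \tilde{\mathbf{X}}_1 = \mathbf{M}_1\mathbf{X}_1.$$ Consider the model $$\mathbf{y}_0 = \mathbf{Z}_0\boldsymbol{\alpha}_0 + \mathbf{X}_0\boldsymbol{\beta}_0 + \boldsymbol{\epsilon}_0,\qquad \mathbf{y}_1 = \mathbf{W}_1\boldsymbol{\alpha}_1 + \mathbf{X}_1\boldsymbol{\beta}_1 + \boldsymbol{\epsilon}_1,\qquad \boldsymbol{\beta}_1 = \boldsymbol{\beta}_0 +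 \boldsymbol{\eta},$$ where $\boldsymbol{\alpha}_0,\boldsymbol{\alpha}_1,\boldsymbol{\beta}_0$ are fixed, $\boldsymbol{\epsilon}_j$ ($j=0,1$) is a random vector with mean $\mathbf{0}$ and covariance $\sigma_j^2\mathbf{I}_{n_j}$, $\boldsymbol{\eta}$ is a random vector with mean $\mathbf{0}$ and covariance $\sigma_\eta^2\mathbf{I}_k$, and $\boldsymbol{\epsilon}_0,\boldsymbol{\epsilon}_1,\boldsymbol{\eta}$ are mutually independent. Define the prediction $$\hat{\mathbf{y}}_{1\mid 0} = \mathbf{W}_1\hat{\boldsymbol{\alpha}}_1 + \mathbf{X}_1\hat{\boldsymbol{\beta}}_0,\quad \hat{\boldsymbol{\beta}}_0 = (\tilde{\mathbf{X}}_0^{\prime}\tilde{\mathbf{X}}_0)^{-1}\tilde{\mathbf{X}}_0^{\prime}\mathbf{y}_0,\quad \hat{\boldsymbol{\alpha}}_1 = (\mathbf{W}_1^{\prime}\mathbf{W}_1)^{-1}\mathbf{W}_1^{\prime}(\mathbf{y}_1 - \mathbf{X}_1\hat{\boldsymbol{\beta}}_0).$$ Then $$\frac{1}{n_1}E\left[(\mathbf{y}_1 - \hat{\mathbf{y}}_{1\mid 0})^{\prime}(\mathbf{y}_1 - \hat{\mathbf{y}}_{1\mid 0})\right] = \frac{n_1 - k_1}{n_1}\sigma_1^2 + \frac{\sigma_\eta^2}{n_1}\operatorname{tr}\left(\tilde{\mathbf{X}}_1^{\prime}\tilde{\mathbf{X}}_1\right) + \frac{\sigma_0^2}{n_1}\operatorname{tr}\left\{(\tilde{\mathbf{X}}_0^{\prime}\tilde{\mathbf{X}}_0)^{-1}\tilde{\mathbf{X}}_1^{\prime}\tilde{\mathbf{X}}_1\right\},$$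 where $k_1$ is the number of predictors (columns) in $\mathbf{W}_1$.
   Context: Two datasets indexed by disjoint index sets $\mathcal{S}_0,\mathcal{S}_1$ with $n_j = |\mathcal{S}_j|$; $\mathbf{y}_j$ stacks the responses of dataset $j$. $\mathbf{X}_0,\mathbf{X}_1$ contain the predictors common to both datasets (with random coefficients linked by $\boldsymbol{\eta}$), while $\mathbf{Z}_0$ and $\mathbf{W}_1$ contain dataset-specific predictors with unrestricted coefficients. The expectation is over $\boldsymbol{\epsilon}_0,\boldsymbol{\epsilon}_1,\boldsymbol{\eta}$ with the design matrices held fixed. *)

(* Defs.v *)
From HB Require Import structures.
From mathcomp Require Import all_boot all_order all_algebra.
From mathcomp Require Import all_classical all_reals all_analysis.
Set Implicit Arguments.
Unset Strict Implicit.
Unset Printing Implicit Defensive.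
Import Order.TTheory GRing.Theory Num.Theory.
Local Open Scope classical_set_scope.
Local Open Scope ring_scope.

Definition rvcoord {T : Type} {R : Type} {n : nat} (V : T -> 'cV[R]_n) (i : 'I_n)
  : T -> R := fun w => V w i ord0.

Definition mean0_cov_scalar {d} {T : measurableType d} {R : realType}
  (P : probability T R) (n : nat) (V : T -> 'cV[R]_n) (s2 : R) : Prop :=
  [/\ (forall i, measurable_fun setT (rvcoord V i)),
      (forall i, rvcoord V i \in Lfun P 2),
      (forall i, ('E_P[rvcoord V i] = 0)%E) &
      (forall i j, covariance P (rvcoord V i) (rvcoord V j)
                   = (s2 * (i == j)%:R)%:E)].

Definition box_event {T : Type} {R : Type} {n : nat} (V : T -> 'cV[R]_n)
  (B : 'I_n -> set R) : set T := [set w | forall i, B i (V w i ord0)].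

(* Mutual independence of three random vectors: the joint law is the product
   of the marginals on measurable boxes (boxes form a pi-system generating the
   Borel sigma-algebras of R^n; taking some boxes equal to the whole space
   yields the product rule for every subfamily). *)
Definition independent3 {d} {T : measurableType d} {R : realType}
  (P : probability T R) {n0 n1 n2 : nat}
  (U : T -> 'cV[R]_n0) (V : T -> 'cV[R]_n1) (W : T -> 'cV[R]_n2) : Prop :=
  forall (A : 'I_n0 -> set R) (B : 'I_n1 -> set R) (C : 'I_n2 -> set R),
    (forall i, measurable (A i)) -> (forall i, measurable (B i)) ->
    (forall i, measurable (C i)) ->
    P (box_event U A `&` box_event V B `&` box_event W C)
    = (P (box_event U A) * P (box_event V B) * P (box_event W C))%E.

(* Main.v *)
Require Import Defs.
From HB Require Import structures.
From mathcomp Require Import all_boot all_order all_algebra.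
From mathcomp Require Import all_classical all_reals all_analysis measurable_realfun.
From mathcomp Require Import ring.
Set Implicit Arguments.
Unset Strict Implicit.
Unset Printing Implicit Defensive.
Import Order.TTheory GRing.Theory Num.Theory.
Local Open Scope classical_set_scope.
Local Open Scope ring_scope.

Lemma zmodE (V : zmodType) (a b c e : V) : a + b + c - (a + e) = b + (- e + c).
Proof. by rewrite opprD addrACA [a + b - a]addrAC subrr add0r [c - e]addrC. Qed.

Section alg.
Context (R : fieldType).

Lemma projZ m p (Z : 'M[R]_(m, p)) : Z^T *m Z \in unitmx ->
  (1%:M - Z *m invmx (Z^T *m Z) *m Z^T) *m Z = 0.
Proof.
by move=> hZ; rewrite mulmxBl mul1mx -!mulmxA mulVmx // mulmx1 subrr.
Qed.

Lemma projT m p (Z : 'M[R]_(m, p)) :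
  (1%:M - Z *m invmx (Z^T *m Z) *m Z^T)^T = 1%:M - Z *m invmx (Z^T *m Z) *m Z^T.
Proof.
by rewrite raddfB /= trmx1 !trmx_mul trmxK trmx_inv trmx_mul trmxK mulmxA.
Qed.

Lemma projI m p (Z : 'M[R]_(m, p)) : Z^T *m Z \in unitmx ->
  (1%:M - Z *m invmx (Z^T *m Z) *m Z^T) *m (1%:M - Z *m invmx (Z^T *m Z) *m Z^T)
  = 1%:M - Z *m invmx (Z^T *m Z) *m Z^T.
Proof.
move=> hZ; by rewrite mulmxBr mulmx1 !mulmxA projZ // !mul0mx subr0.
Qed.

Lemma projtr m p (Z : 'M[R]_(m, p)) : Z^T *m Z \in unitmx ->
  \tr (1%:M - Z *m invmx (Z^T *m Z) *m Z^T) = m%:R - p%:R.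
Proof.
move=> hZ; by rewrite raddfB /= mxtrace1 mxtrace_mulC mulmxA mulmxV // mxtrace1.
Qed.

Lemma colc_gen : True. Proof. by []. Qed.

Lemma blk_l n p q (B1 : 'M[R]_(n, p)) (B2 : 'M[R]_(n, q)) i :
  ((row_mx B1 B2)^T *m row_mx B1 B2) (lshift q i) (lshift q i) = (B1^T *m B1) i i.
Proof. by rewrite tr_row_mx mul_col_mx col_mxEu mul_mx_row row_mxEl. Qed.

Lemma blk_r n p q (B1 : 'M[R]_(n, p)) (B2 : 'M[R]_(n, q)) i :
  ((row_mx B1 B2)^T *m row_mx B1 B2) (rshift p i) (rshift p i) = (B2^T *m B2) i i.
Proof. by rewrite tr_row_mx mul_col_mx col_mxEd mul_mx_row row_mxEr. Qed.

Lemma AAT_gen m p (X : 'M[R]_(m, p)) : X^T *m X \in unitmx ->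
  (invmx (X^T *m X) *m X^T) *m (invmx (X^T *m X) *m X^T)^T = invmx (X^T *m X).
Proof.
move=> hX; rewrite trmx_mul trmxK mulmxA -(mulmxA (invmx _)) mulVmx // mul1mx.
by rewrite trmx_inv trmx_mul trmxK.
Qed.

Lemma trNN m p (Y : 'M[R]_(m, p)) : (- Y)^T *m (- Y) = Y^T *m Y.
Proof. by rewrite mulmxN [(- Y)^T]raddfN /= mulNmx opprK. Qed.

Lemma tr_sandwich m p q (Y : 'M[R]_(m, p)) (A : 'M[R]_(p, q)) :
  \tr ((Y *m A)^T *m (Y *m A)) = \tr ((A *m A^T) *m (Y^T *m Y)).
Proof.
by rewrite trmx_mul mulmxA mxtrace_mulC !mulmxA.
Qed.

End alg.

Section indep.
Context d (T : measurableType d) (R : realType) (P : probability T R).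
Local Open Scope ereal_scope.

Lemma indep_EM (X Y : T -> R) :
  X \in Lfun P 2%:E -> Y \in Lfun P 2%:E ->
  (forall A B, measurable A -> measurable B ->
     P (X @^-1` A `&` Y @^-1` B) = P (X @^-1` A) * P (Y @^-1` B)) ->
  'E_P[X \* Y] = 'E_P[X] * 'E_P[Y].
Proof.
move=> X2 Y2 hXY.
have mX : measurable_fun setT X.
  by move: X2; rewrite inE => /andP[]; rewrite inE.
have mY : measurable_fun setT Y.
  by move: Y2; rewrite inE => /andP[]; rewrite inE.
have mXY := measurable_fun_pair mX mY.
pose Xm : {mfun T >-> R} := HB.pack X (isMeasurableFun.Build _ _ _ _ _ mX).
pose Ym : {mfun T >-> R} := HB.pack Y (isMeasurableFun.Build _ _ _ _ _ mY).
pose XYm : {mfun T >-> (R * R)%type} :=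
  HB.pack (fun w => (X w, Y w)) (isMeasurableFun.Build _ _ _ _ _ mXY).
pose PX := distribution P Xm.
pose PY := distribution P Ym.
pose Q := distribution P XYm.
have PQ : forall S, measurable S -> (PX \x PY) S = Q S.
  apply: product_measure_unique => A B mA mB.
  rewrite /Q /distribution /pushforward /= -hXY //.
pose f : (R * R)%type -> \bar R := fun z => (z.1 * z.2)%:E.
have mf : measurable_fun setT f.
  by apply/measurable_EFinP; apply: measurable_funM; [exact: measurable_fst|exact: measurable_snd].
have XY1 := Lfun2_mul_Lfun1 X2 Y2.
have iXY := (Lfun1_integrable _ _).1 XY1.
have X1 : X \in Lfun P 1 by apply: Lfun_subset12 => //; exact: fin_num_measure.
have Y1 : Y \in Lfun P 1 by apply: Lfun_subset12 => //; exact: fin_num_measure.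
have iX := (Lfun1_integrable _ _).1 X1.
have iY := (Lfun1_integrable _ _).1 Y1.
have eQ : \int[PX \x PY]_z f z = \int[Q]_z f z.
  by apply: eq_measure_integral => A mA _; exact: PQ.
have eQa : \int[PX \x PY]_z `|f z| = \int[Q]_z `|f z|.
  by apply: eq_measure_integral => A mA _; exact: PQ.
have imf : (PX \x PY).-integrable setT f.
  apply/integrableP; split => //; rewrite eQa.
  rewrite ge0_integral_distribution //; last first.
    exact: measurableT_comp.
  by move/integrableP: iXY => [].
have EXY : 'E_P[X \* Y] = \int[Q]_z f z.
  by rewrite unlock integral_distribution.
have iPY : PY.-integrable setT EFin.
  apply/integrableP; split; first exact/measurable_EFinP.
  rewrite ge0_integral_distribution //; last exact: measurableT_comp.
  by move/integrableP: iY => [].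
have iPX : PX.-integrable setT EFin.
  apply/integrableP; split; first exact/measurable_EFinP.
  rewrite ge0_integral_distribution //; last exact: measurableT_comp.
  by move/integrableP: iX => [].
have EY : \int[PY]_y y%:E = 'E_P[Y].
  by rewrite unlock integral_distribution.
have EX : \int[PX]_y y%:E = 'E_P[X].
  by rewrite unlock integral_distribution.
rewrite EXY -eQ -(integral12_prod_meas1 imf) /fubini_F /f /=.
under eq_integral => x _ do (rewrite (eq_integral (fun y => x%:E * y%:E)); [rewrite integralZl // EY|by move=> y _; rewrite EFinM]).
have fY := expectation_fin_num Y1.
by rewrite -(fineK fY) integralZr // EX.
Qed.
End indep.

Section mom.
Context d (T : measurableType d) (R : realType) (P : probability T R).
Local Open Scope ereal_scope.

Definition mom {p} (U : T -> 'cV[R]_p) (c : 'I_p -> R) :=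
  (forall a, rvcoord U a \in Lfun P 2%:E) /\
  forall a b, 'E_P[rvcoord U a \* rvcoord U b] = (c a * (a == b)%:R)%:E.

Definition cross {p q} (U : T -> 'cV[R]_p) (V : T -> 'cV[R]_q) :=
  forall a b, 'E_P[rvcoord U a \* rvcoord V b] = 0.

Lemma crossC p q (U : T -> 'cV[R]_p) (V : T -> 'cV[R]_q) : cross U V -> cross V U.
Proof.
move=> h a b; rewrite -(h b a); congr expectation; apply/funext => w /=.
by rewrite mulrC.
Qed.
Arguments crossC {p q U V}.

Definition colf {p q} (U : T -> 'cV[R]_p) (V : T -> 'cV[R]_q) :=
  fun w => col_mx (U w) (V w).

Lemma rvcoord_colu p q (U : T -> 'cV[R]_p) (V : T -> 'cV[R]_q) i :
  rvcoord (colf U V) (lshift q i) = rvcoord U i.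
Proof. by apply/funext => w; rewrite /rvcoord /colf col_mxEu. Qed.

Lemma rvcoord_cold p q (U : T -> 'cV[R]_p) (V : T -> 'cV[R]_q) i :
  rvcoord (colf U V) (rshift p i) = rvcoord V i.
Proof. by apply/funext => w; rewrite /rvcoord /colf col_mxEd. Qed.

Definition colc {p q} (cU : 'I_p -> R) (cV : 'I_q -> R) :=
  fun a : 'I_(p + q) => match fintype.split a with inl i => cU i | inr j => cV j end.

Lemma mom_col p q (U : T -> 'cV[R]_p) (V : T -> 'cV[R]_q) cU cV :
  mom U cU -> mom V cV -> cross U V -> mom (colf U V) (colc cU cV).
Proof.
move=> [U2 hU] [V2 hV] hUV; split.
  by move=> a; rewrite -(splitK a); case: (fintype.split a) => i /=;
    rewrite ?rvcoord_colu ?rvcoord_cold.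
move=> a b; rewrite -(splitK a) -(splitK b) /colc !unsplitK.
case: (fintype.split a) => i; case: (fintype.split b) => j /=;
  rewrite ?rvcoord_colu ?rvcoord_cold ?eq_lshift ?eq_rshift ?eq_lrshift ?eq_rlshift ?hU ?hV //=.
- by rewrite mulr0.
- by rewrite (crossC hUV) mulr0.
Qed.

Lemma cross_col p q r (U : T -> 'cV[R]_p) (V : T -> 'cV[R]_q) (W : T -> 'cV[R]_r) :
  cross U V -> cross U W -> cross U (colf V W).
Proof.
move=> hV hW a b; rewrite -(splitK b); case: (fintype.split b) => j /=;
  by rewrite ?rvcoord_colu ?rvcoord_cold.
Qed.


Lemma E_sum (I : finType) (F : I -> T -> R) :
  (forall i, F i \in Lfun P 1) ->
  'E_P[fun w => (\sum_i F i w)%R] = \sum_i 'E_P[F i].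
Proof.
move=> hF; rewrite unlock; under eq_integral do rewrite -sumEFin.
rewrite integral_sum //.
by move=> i; exact/(Lfun1_integrable _ _).1.
Qed.

Lemma L21 (X : T -> R) : X \in Lfun P 2%:E -> X \in Lfun P 1.
Proof. by move=> h; apply: Lfun_subset12 => //; exact: fin_num_measure. Qed.

Lemma mom_of_cov n (U : T -> 'cV[R]_n) s2 :
  mean0_cov_scalar P U s2 -> mom U (fun _ => s2).
Proof.
case=> mU U2 U0 cov; split => // a b.
have := cov a b; rewrite covarianceE ?U0 ?mul0e ?sube0 //.
- exact: L21.
- exact: L21.
- exact: Lfun2_mul_Lfun1.
Qed.

Definition box1 {n} (i : 'I_n) (A : set R) : 'I_n -> set R :=
  fun j => if j == i then A else setT.

Lemma box_event1 n (U : T -> 'cV[R]_n) i A :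
  box_event U (box1 i A) = rvcoord U i @^-1` A.
Proof.
apply/seteqP; split => w /=.
  by move=> /(_ i); rewrite /box1 eqxx.
by move=> h j; rewrite /box1; case: eqP => [->|].
Qed.

Lemma box_eventT n (U : T -> 'cV[R]_n) : box_event U (fun _ => setT) = setT.
Proof. by apply/seteqP; split. Qed.

Lemma mbox1 n (i : 'I_n) A : measurable A -> forall j, measurable (box1 i A j).
Proof. by move=> mA j; rewrite /box1; case: eqP. Qed.

Lemma mboxT n : forall j : 'I_n, measurable ((fun _ => setT : set R) j).
Proof. by []. Qed.

Lemma cross_of_indep p q (U : T -> 'cV[R]_p) (V : T -> 'cV[R]_q) s1 s2 :
  mean0_cov_scalar P U s1 -> mean0_cov_scalar P V s2 ->
  (forall i j A B, measurable A -> measurable B ->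
     P (rvcoord U i @^-1` A `&` rvcoord V j @^-1` B)
     = P (rvcoord U i @^-1` A) * P (rvcoord V j @^-1` B)) ->
  cross U V.
Proof.
case=> _ U2 U0 _ [_ V2 V0 _] h a b.
by rewrite indep_EM // ?U0 ?V0 ?mul0e //; move=> A B mA mB; apply: h.
Qed.

Lemma indep_UV p q r (U : T -> 'cV[R]_p) (V : T -> 'cV[R]_q) (W : T -> 'cV[R]_r) :
  independent3 P U V W ->
  forall i j A B, measurable A -> measurable B ->
     P (rvcoord U i @^-1` A `&` rvcoord V j @^-1` B)
     = P (rvcoord U i @^-1` A) * P (rvcoord V j @^-1` B).
Proof.
move=> h i j A B mA mB.
have := h (box1 i A) (box1 j B) (fun _ => setT) (@mbox1 _ i A mA) (@mbox1 _ j B mB) (@mboxT r).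
by rewrite !box_event1 box_eventT setIT probability_setT mule1.
Qed.

Lemma indep_UW p q r (U : T -> 'cV[R]_p) (V : T -> 'cV[R]_q) (W : T -> 'cV[R]_r) :
  independent3 P U V W ->
  forall i j A B, measurable A -> measurable B ->
     P (rvcoord U i @^-1` A `&` rvcoord W j @^-1` B)
     = P (rvcoord U i @^-1` A) * P (rvcoord W j @^-1` B).
Proof.
move=> h i j A B mA mB.
have := h (box1 i A) (fun _ => setT) (box1 j B) (@mbox1 _ i A mA) (@mboxT q) (@mbox1 _ j B mB).
by rewrite !box_event1 box_eventT setIT probability_setT mule1.
Qed.

Lemma indep_VW p q r (U : T -> 'cV[R]_p) (V : T -> 'cV[R]_q) (W : T -> 'cV[R]_r) :
  independent3 P U V W ->
  forall i j A B, measurable A -> measurable B ->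
     P (rvcoord V i @^-1` A `&` rvcoord W j @^-1` B)
     = P (rvcoord V i @^-1` A) * P (rvcoord W j @^-1` B).
Proof.
move=> h i j A B mA mB.
have := h (fun _ => setT) (box1 i A) (box1 j B) (@mboxT p) (@mbox1 _ i A mA) (@mbox1 _ j B mB).
by rewrite !box_event1 box_eventT setTI probability_setT mul1e.
Qed.


Lemma quad_pw N n (x : 'cV[R]_N) (B : 'M[R]_(n, N)) :
  ((B *m x)^T *m (B *m x)) ord0 ord0 =
  (\sum_(pr : 'I_N * 'I_N) (x pr.1 ord0 * x pr.2 ord0) * (B^T *m B) pr.1 pr.2)%R.
Proof.
rewrite trmx_mul -mulmxA (mulmxA B^T) mxE.
rewrite -(pair_bigA _ (fun a b => (x a ord0 * x b ord0) * (B^T *m B) a b)%R) /=.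
apply: eq_bigr => a _; rewrite !mxE big_distrr /=.
apply: eq_bigr => b _; rewrite !mxE.
by rewrite mulrCA mulrC.
Qed.

Lemma quadE N n (u : T -> 'cV[R]_N) c (B : 'M[R]_(n, N)) : mom u c ->
  'E_P[fun w => ((B *m u w)^T *m (B *m u w)) ord0 ord0] =
  (\sum_a (B^T *m B) a a * c a)%:E.
Proof.
case=> u2 hu.
under [X in 'E_P[X]]funext => w do rewrite quad_pw.
rewrite E_sum; last first.
  move=> pr.
  have h := Lfun_scale ((B^T *m B) pr.1 pr.2) (lexx _) (Lfun2_mul_Lfun1 (u2 pr.1) (u2 pr.2)).
  exact h.
under eq_bigr => pr _ do rewrite (expectationZl _ (Lfun2_mul_Lfun1 (u2 pr.1) (u2 pr.2))).
under eq_bigr => pr _ do rewrite hu -EFinM.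
rewrite sumEFin; congr EFin.
rewrite -(pair_bigA _ (fun a b => (B^T *m B) a b * (c a * (a == b)%:R))%R) /=.
apply: eq_bigr => a _.
rewrite (bigD1 a) //= eqxx mulr1 big1 ?addr0 //.
by move=> b /negbTE; rewrite eq_sym => ->; rewrite !mulr0.
Qed.
End mom.

Lemma colc_l (R : realType) p q (cU : 'I_p -> R) (cV : 'I_q -> R) i : colc cU cV (lshift q i) = cU i.
Proof. by rewrite /colc -[lshift q i]/(unsplit (inl i)) unsplitK. Qed.
Lemma colc_r (R : realType) p q (cU : 'I_p -> R) (cV : 'I_q -> R) i : colc cU cV (rshift p i) = cV i.
Proof. by rewrite /colc -[rshift p i]/(unsplit (inr i)) unsplitK. Qed.

Theorem proposition2
  (d : measure_display) (T : measurableType d) (R : realType)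
  (P : probability T R)
  (n0 n1 m0 k k1 : nat) (hn0 : (0 < n0)%N) (hn1 : (0 < n1)%N)
  (Z0 : 'M[R]_(n0, m0)) (X0 : 'M[R]_(n0, k))
  (W1 : 'M[R]_(n1, k1)) (X1 : 'M[R]_(n1, k))
  (hZ0 : Z0^T *m Z0 \in unitmx) (hW1 : W1^T *m W1 \in unitmx)
  (M0 := 1%:M - Z0 *m invmx (Z0^T *m Z0) *m Z0^T)
  (Xt0 := M0 *m X0)
  (M1 := 1%:M - W1 *m invmx (W1^T *m W1) *m W1^T)
  (Xt1 := M1 *m X1)
  (hXt0 : Xt0^T *m Xt0 \in unitmx)
  (alpha0 : 'cV[R]_m0) (alpha1 : 'cV[R]_k1) (beta0 : 'cV[R]_k)
  (sigma0 sigma1 sigma_eta : R)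
  (eps0 : T -> 'cV[R]_n0) (eps1 : T -> 'cV[R]_n1) (eta : T -> 'cV[R]_k)
  (heps0 : mean0_cov_scalar P eps0 (sigma0 ^+ 2))
  (heps1 : mean0_cov_scalar P eps1 (sigma1 ^+ 2))
  (heta : mean0_cov_scalar P eta (sigma_eta ^+ 2))
  (hind : independent3 P eps0 eps1 eta)
  (y0 : T -> 'cV[R]_n0) (y1 : T -> 'cV[R]_n1) (beta1 : T -> 'cV[R]_k)
  (hy0 : forall w, y0 w = Z0 *m alpha0 + X0 *m beta0 + eps0 w)
  (hy1 : forall w, y1 w = W1 *m alpha1 + X1 *m beta1 w + eps1 w)
  (hbeta1 : forall w, beta1 w = beta0 + eta w)
  (beta0_hat : T -> 'cV[R]_k) (alpha1_hat : T -> 'cV[R]_k1)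
  (y1_hat : T -> 'cV[R]_n1)
  (hb0 : forall w, beta0_hat w = invmx (Xt0^T *m Xt0) *m Xt0^T *m y0 w)
  (ha1 : forall w, alpha1_hat w
           = invmx (W1^T *m W1) *m W1^T *m (y1 w - X1 *m beta0_hat w))
  (hyh : forall w, y1_hat w = W1 *m alpha1_hat w + X1 *m beta0_hat w) :
  ((n1%:R)^-1%:E *
     'E_P[fun w => ((y1 w - y1_hat w)^T *m (y1 w - y1_hat w)) ord0 ord0])%E
  = ((n1%:R - k1%:R) / n1%:R * sigma1 ^+ 2
     + sigma_eta ^+ 2 / n1%:R * \tr (Xt1^T *m Xt1)
     + sigma0 ^+ 2 / n1%:R * \tr (invmx (Xt0^T *m Xt0) *m (Xt1^T *m Xt1)))%:E.
Proof.
have m_eta := mom_of_cov heta.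
have m_e0 := mom_of_cov heps0.
have m_e1 := mom_of_cov heps1.
have c01 : cross P eps0 eps1 := cross_of_indep heps0 heps1 (indep_UV hind).
have c0e : cross P eps0 eta := cross_of_indep heps0 heta (indep_UW hind).
have c1e : cross P eps1 eta := cross_of_indep heps1 heta (indep_VW hind).
have mu := mom_col m_eta (mom_col m_e0 m_e1 c01) (cross_col (crossC c0e) (crossC c1e)).
pose G := invmx (Xt0^T *m Xt0).
pose A := G *m Xt0^T.
have M0Z : M0 *m Z0 = 0 by exact: projZ.
have M0T : M0^T = M0 by exact: projT.
have M0I : M0 *m M0 = M0 by exact: projI.
have M1W : M1 *m W1 = 0 by exact: projZ.
have M1T : M1^T = M1 by exact: projT.
have M1I : M1 *m M1 = M1 by exact: projI.
have XtX : Xt0^T *m Xt0 = Xt0^T *m X0.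
  by rewrite /Xt0 !trmx_mul M0T mulmxA -(mulmxA X0^T) M0I.
have AX0 : A *m X0 = 1%:M by rewrite /A -mulmxA -XtX mulVmx.
have AZ0 : A *m Z0 = 0.
  by rewrite /A -mulmxA /Xt0 trmx_mul M0T -mulmxA M0Z !mulmx0.
have hb w : beta0_hat w = beta0 + A *m eps0 w.
  by rewrite hb0 -/G -/A hy0 !mulmxDr !mulmxA AZ0 AX0 mul0mx add0r mul1mx.
pose B := row_mx Xt1 (row_mx (- (Xt1 *m A)) M1).
have res w : y1 w - y1_hat w = B *m colf eta (colf eps0 eps1) w.
  have e1 : y1 w - y1_hat w = M1 *m (y1 w - X1 *m beta0_hat w).
    by rewrite hyh ha1 /M1 mulmxBl mul1mx !mulmxA opprD addrA addrAC.
  rewrite e1 hy1 hbeta1 hb /B /colf !mul_row_col.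
  by rewrite !mulmxDr !mulmxN !mulmxA M1W mul0mx add0r -/Xt1 mulNmx mulmxDr !mulmxA -/Xt1 zmodE.
have -> : (fun w => ((y1 w - y1_hat w)^T *m (y1 w - y1_hat w)) ord0 ord0)
  = (fun w => ((B *m colf eta (colf eps0 eps1) w)^T *m (B *m colf eta (colf eps0 eps1) w)) ord0 ord0).
  by apply/funext => w; rewrite res.
rewrite (quadE B mu) -EFinM; congr EFin.
rewrite big_split_ord /= big_split_ord /=.
rewrite /B.
under eq_bigr => i _ do rewrite blk_l colc_l.
rewrite [X in _ + (X + _)](eq_bigr (fun i => ((- (Xt1 *m A))^T *m (- (Xt1 *m A))) i i * sigma0 ^+ 2)); last first.
  by move=> i _; rewrite blk_r blk_l colc_r colc_l.
rewrite [X in _ + (_ + X)](eq_bigr (fun i => (M1^T *m M1) i i * sigma1 ^+ 2)); last first.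
  by move=> i _; rewrite blk_r blk_r colc_r colc_r.
rewrite -!mulr_suml -![\sum_i _ _ i]/(\tr _).
have t1 : \tr (M1^T *m M1) = n1%:R - k1%:R by rewrite M1T M1I; exact: projtr.
have AAT : A *m A^T = G.
  exact: AAT_gen.
have t0 : \tr ((- (Xt1 *m A))^T *m - (Xt1 *m A)) = \tr (G *m (Xt1^T *m Xt1)).
  by rewrite trNN tr_sandwich AAT.
rewrite t0 t1 /G.
ring.
Qed.
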